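(* Let $d\ge 1$, $\kappa \in \{0,\dots,d-1\}$, $\varepsilon_0 \ge 0$, $p_0 = \frac{e^{\varepsilon_0}}{1+e^{\varepsilon_0}}$, $\varepsilon\ge 0$, and $\tau = \lceil\frac{d+\kappa+1}{2}\rceil/d$. If \[ \log\Big(\sum_{\ell=0}^{d\tau-1}\binom d\ell\Big) - \log\Big(\sum_{\ell=d\tau}^{d}\binom d\ell\Big) \le \varepsilon, \] then the mechanism $u\mapsto\mathrm{PrivUnitInfty}(u,\kappa,p_0)$ on $[-1,1]^d$ is $(\varepsilon+\varepsilon_0)$-locally differentially private.
   Context: $\mathrm{PrivUnitInfty}(u,\kappa,p)$ for $u\in[-1,1]^d$, $\kappa\in\{0,\dots,d-1\}$, $p\in[1/2,1]$: independently for each $j$, set $\widehat U_j=1$ with probability $\frac{1+u_j}2$ and $\widehat U_j=-1$ otherwise. Then with probability $p$ draw $V$ uniformly from $\{v\in\{-1,1\}^d:\langle v,\widehat U\rangle>\kappa\}$, and otherwise uniformly from $\{v\in\{-1,1\}^d:\langle v,\widehat U\rangle\le\kappa\}$. With $\tau=\lceil\frac{d+\kappa+1}2\rceil/d$ set $m = p\frac{\binom{d-1}{d\tau-1}}{\sum_{\ell=d\tau}^d\binom d\ell} - (1-p)\frac{\binom{d-1}{d\tau-1}}{\sum_{\ell=0}^{d\tau-1}\binom d\ell}$ and output $Z=V/m$. A mechanism $M$ is $\varepsilon$-locally differentially private if $\mathbb P(M(u)\in S)\le e^{\varepsilon}\mathbb P(M(u')\in S)$ for all inputs $u,u'$ and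 all sets $S$. *)

(* Defs.v *)
From Stdlib Require Import Reals List Arith ClassicalEpsilon.
Import ListNotations.
Open Scope R_scope.

(* Sum of f l over l in [a, b] (natural numbers; empty if b < a). *)
Definition sum_range (a b : nat) (f : nat -> R) : R :=
  fold_right Rplus 0 (map f (seq a (S b - a))).

Definition lsum {A : Type} (l : list A) (f : A -> R) : R :=
  fold_right Rplus 0 (map f l).

(* Sign vectors in {-1,1}^d, encoded as lists of booleans of length d
   (true = +1, false = -1); enumerated without repetition. *)
Fixpoint signvecs (d : nat) : list (list bool) :=
  match d with
  | O => [[]]
  | S n => map (cons true) (signvecs n) ++ map (cons false) (signvecs n)
  end.

Definition sgn (b : bool) : R := if b then 1 else -1.

Definition to_real (v : list bool) : list R := map sgn v.

Definition ip (v w : list bool) : R :=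
  fold_right Rplus 0 (map (fun xy : bool * bool => sgn (fst xy) * sgn (snd xy)) (combine v w)).

Definition prob_Uhat (u : list R) (w : list bool) : R :=
  fold_right Rmult 1
    (map (fun xy : R * bool => if snd xy then (1 + fst xy) / 2 else (1 - fst xy) / 2)
         (combine u w)).

Definition n_above (d kappa : nat) (w : list bool) : R :=
  INR (length (filter (fun v => if Rlt_dec (INR kappa) (ip v w) then true else false)
                      (signvecs d))).
Definition n_below (d kappa : nat) (w : list bool) : R :=
  INR (length (filter (fun v => if Rlt_dec (INR kappa) (ip v w) then false else true)
                      (signvecs d))).

Definition prob_V_given (d kappa : nat) (p : R) (w v : list bool) : R :=
  if Rlt_dec (INR kappa) (ip v w) then p / n_above d kappa w
  else (1 - p) / n_below d kappa w.

Definition prob_V (d kappa : nat) (p : R) (u : list R) (v : list bool) : R :=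
  lsum (signvecs d) (fun w => prob_Uhat u w * prob_V_given d kappa p w v).

(* d * tau = ceil((d + kappa + 1) / 2) = (d + kappa + 2) / 2 (nat division). *)
Definition dtau (d kappa : nat) : nat := Nat.div (d + kappa + 2) 2.

Definition m_const (d kappa : nat) (p : R) : R :=
  let t := dtau d kappa in
  p * C (d - 1) (t - 1) / sum_range t d (fun l => C d l)
  - (1 - p) * C (d - 1) (t - 1) / sum_range 0 (t - 1) (fun l => C d l).

Definition outZ (d kappa : nat) (p : R) (v : list bool) : list R :=
  map (fun x => x / m_const d kappa p) (to_real v).

Definition indic {A : Type} (S : A -> Prop) (x : A) : R :=
  if excluded_middle_informative (S x) then 1 else 0.

Definition prob_out (d kappa : nat) (p : R) (u : list R) (S : list R -> Prop) : R :=
  lsum (signvecs d) (fun v => indic S (outZ d kappa p v) * prob_V d kappa p u v).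

Definition in_cube (d : nat) (u : list R) : Prop :=
  length u = d /\ Forall (fun x => -1 <= x <= 1) u.

Definition privunit_LDP (d kappa : nat) (p eps : R) : Prop :=
  forall (u u' : list R) (S : list R -> Prop),
    in_cube d u -> in_cube d u' ->
    prob_out d kappa p u S <= exp eps * prob_out d kappa p u' S.

(* Main.v *)
Require Import Defs.
From Stdlib Require Import Reals.
From Stdlib Require Import List Arith Lia Lra Psatz ClassicalEpsilon.
Import ListNotations.
Open Scope R_scope.

Lemma lsum_nil {A} (f : A -> R) : lsum [] f = 0.
Proof. reflexivity. Qed.
Lemma lsum_cons {A} (x : A) l f : lsum (x :: l) f = f x + lsum l f.
Proof. reflexivity. Qed.
Lemma lsum_app {A} (l1 l2 : list A) f : lsum (l1 ++ l2) f = lsum l1 f + lsum l2 f.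
Proof. induction l1; [unfold lsum; simpl; ring|]. simpl; rewrite !lsum_cons, IHl1; ring. Qed.
Lemma lsum_map {A B} (g : A -> B) l f : lsum (map g l) f = lsum l (fun x => f (g x)).
Proof. induction l; [reflexivity|]. rewrite map_cons, !lsum_cons, IHl; reflexivity. Qed.
Lemma lsum_ext_in {A} (l : list A) f g : (forall x, In x l -> f x = g x) -> lsum l f = lsum l g.
Proof. induction l; intros H; [reflexivity|]. rewrite !lsum_cons, H, IHl; auto; [intros; apply H|]; simpl; auto. Qed.
Lemma lsum_le_in {A} (l : list A) f g : (forall x, In x l -> f x <= g x) -> lsum l f <= lsum l g.
Proof. induction l; intros H; [unfold lsum; simpl; lra|]. rewrite !lsum_cons.
  apply Rplus_le_compat; [apply H; simpl; auto|apply IHl; intros; apply H; simpl; auto]. Qed.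
Lemma lsum_scal {A} (l : list A) c f : lsum l (fun x => c * f x) = c * lsum l f.
Proof. induction l; [unfold lsum; simpl; ring|]. rewrite !lsum_cons, IHl; ring. Qed.
Lemma lsum_plus {A} (l : list A) f g : lsum l (fun x => f x + g x) = lsum l f + lsum l g.
Proof. induction l; [unfold lsum; simpl; ring|]. rewrite !lsum_cons, IHl; ring. Qed.
Lemma lsum_zero {A} (l : list A) : lsum l (fun _ => 0) = 0.
Proof. induction l; [reflexivity|]. rewrite lsum_cons, IHl; ring. Qed.
Lemma lsum_ge_term {A} (l : list A) f y : (forall x, In x l -> 0 <= f x) -> In y l -> f y <= lsum l f.
Proof. induction l; intros H Hy; [destruct Hy|]. rewrite lsum_cons. destruct Hy as [<-|Hy].
  - assert (0 <= lsum l f) by (rewrite <- (lsum_zero l); apply lsum_le_in; intros; apply H; simpl; auto). lra.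
  - assert (f y <= lsum l f) by (apply IHl; auto; intros; apply H; simpl; auto).
    assert (0 <= f a) by (apply H; simpl; auto). lra. Qed.

Lemma count_lsum {A} (f : A -> bool) l :
  INR (length (filter f l)) = lsum l (fun v => if f v then 1 else 0).
Proof. induction l; [reflexivity|]. simpl filter. rewrite lsum_cons. destruct (f a); simpl length;
  [rewrite S_INR, IHl; ring | rewrite IHl; ring]. Qed.

Fixpoint bn (n k : nat) : nat :=
  match n, k with
  | _, O => 1%nat
  | O, S _ => 0%nat
  | S n', S k' => (bn n' k' + bn n' (S k'))%nat
  end.

Lemma bn_big : forall n k, (n < k)%nat -> bn n k = 0%nat.
Proof. induction n; intros [|k] H; simpl; try lia; auto. rewrite !IHn; lia. Qed.
Lemma bn_nn : forall n, bn n n = 1%nat.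
Proof. induction n; simpl; auto. rewrite IHn, bn_big; lia. Qed.

Lemma C_n0 n : C n 0 = 1.
Proof. unfold C. rewrite Nat.sub_0_r. change (INR (fact 0)) with 1. field. apply INR_fact_neq_0. Qed.
Lemma C_nn n : C n n = 1.
Proof. unfold C. rewrite Nat.sub_diag. change (INR (fact 0)) with 1. field. apply INR_fact_neq_0. Qed.

Lemma C_bn : forall n k, (k <= n)%nat -> C n k = INR (bn n k).
Proof. induction n; intros [|k] H.
  - rewrite C_n0; reflexivity.
  - lia.
  - rewrite C_n0; reflexivity.
  - destruct (Nat.eq_dec k n) as [->|Hk].
    + rewrite C_nn, bn_nn; reflexivity.
    + rewrite <- pascal by lia. simpl bn. rewrite plus_INR, !IHn by lia. reflexivity. Qed.

Lemma ip_cons c v x w : ip (c :: v) (x :: w) = sgn c * sgn x + ip v w.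
Proof. reflexivity. Qed.

Lemma ip_neg : forall v w, ip v (map negb w) = - ip v w.
Proof. induction v; intros [|x w]; try (unfold ip; simpl; ring).
  simpl map. rewrite !ip_cons, IHv. destruct a, x; simpl; ring. Qed.

Lemma pascal_sum n (G : nat -> R) :
  lsum (seq 0 (S (S n))) (fun l => INR (bn (S n) l) * G l) =
  lsum (seq 0 (S n)) (fun l => INR (bn n l) * G (S l)) +
  lsum (seq 0 (S n)) (fun l => INR (bn n l) * G l).
Proof.
  change (seq 0 (S (S n))) with (0%nat :: seq 1 (S n)).
  rewrite <- seq_shift, lsum_cons, lsum_map.
  simpl (bn (S n) 0).
  rewrite (lsum_ext_in _ _ (fun l => INR (bn n l) * G (S l) + INR (bn n (S l)) * G (S l)))
    by (intros; simpl bn; rewrite plus_INR; ring).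
  rewrite lsum_plus.
  assert (H1 : lsum (seq 0 (S n)) (fun l => INR (bn n l) * G l) =
     G 0%nat + lsum (seq 0 n) (fun l => INR (bn n (S l)) * G (S l))).
  { change (seq 0 (S n)) with (0%nat :: seq 1 n).
    rewrite <- seq_shift, lsum_cons, lsum_map. replace (bn n 0) with 1%nat by (destruct n; reflexivity). simpl INR. ring. }
  assert (H2 : lsum (seq 0 (S n)) (fun l => INR (bn n (S l)) * G (S l)) =
     lsum (seq 0 n) (fun l => INR (bn n (S l)) * G (S l))).
  { rewrite seq_S, lsum_app, lsum_cons, lsum_nil. rewrite bn_big by lia. simpl INR. ring. }
  rewrite H1, H2. simpl INR. ring.
Qed.

Lemma signvecs_len : forall d w, In w (signvecs d) -> length w = d.
Proof. induction d; simpl; intros w H.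
  - destruct H as [<-|[]]; reflexivity.
  - apply in_app_or in H. destruct H as [H|H]; apply in_map_iff in H;
      destruct H as [x [<- Hx]]; simpl; f_equal; auto. Qed.

Lemma count_F : forall n w (F : R -> R), length w = n ->
  lsum (signvecs n) (fun v => F (ip v w)) =
  lsum (seq 0 (S n)) (fun l => INR (bn n l) * F (2 * INR l - INR n)).
Proof.
  induction n; intros w F Hw.
  - destruct w; [|discriminate]. unfold lsum; simpl. unfold ip; simpl.
    replace (2 * 0 - 0) with 0 by ring. ring.
  - destruct w as [|x w']; [discriminate|]. simpl in Hw. injection Hw as Hw.
    simpl signvecs. rewrite lsum_app, !lsum_map.
    rewrite (lsum_ext_in _ _ (fun v => (fun t => F (sgn true * sgn x + t)) (ip v w')))
      by (intros; rewrite ip_cons; reflexivity).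
    rewrite (lsum_ext_in _ (fun v => F (ip (false :: v) (x :: w')))
       (fun v => (fun t => F (sgn false * sgn x + t)) (ip v w')))
      by (intros; rewrite ip_cons; reflexivity).
    pose proof (IHn w' (fun t => F (sgn true * sgn x + t)) Hw) as E1.
    pose proof (IHn w' (fun t => F (sgn false * sgn x + t)) Hw) as E2.
    cbv beta in E1, E2. rewrite E1, E2.
    rewrite (pascal_sum n (fun l => F (2 * INR l - INR (S n)))).
    destruct x; simpl sgn; [|rewrite Rplus_comm]; f_equal; apply lsum_ext_in; intros l _;
      f_equal; f_equal; rewrite ?S_INR; ring.
Qed.

Lemma dtau_facts d k : (1 <= d)%nat -> (k <= d - 1)%nat ->
  (1 <= dtau d k)%nat /\ (dtau d k <= d)%nat /\
  (forall l, (l < dtau d k)%nat -> ~ (k + d < l + l)%nat) /\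
  (forall l, (dtau d k <= l)%nat -> (k + d < l + l)%nat).
Proof.
  intros H1 H2. unfold dtau.
  pose proof (Nat.div_mod (d + k + 2) 2 ltac:(lia)) as E.
  pose proof (Nat.mod_upper_bound (d + k + 2) 2 ltac:(lia)) as M.
  set (q := ((d + k + 2) / 2)%nat) in *. set (r := ((d + k + 2) mod 2)%nat) in *.
  repeat split; intros; lia.
Qed.

Lemma ind_iff k d l : INR k < 2 * INR l - INR d <-> (k + d < l + l)%nat.
Proof. split; intros H.
  - apply INR_lt. rewrite !plus_INR. lra.
  - apply lt_INR in H. rewrite !plus_INR in H. lra. Qed.

Lemma bn_C_seq d a len : (a + len <= S d)%nat ->
  lsum (seq a len) (fun l => INR (bn d l)) = lsum (seq a len) (fun l => C d l).
Proof. intros H. apply lsum_ext_in. intros l Hl. apply in_seq in Hl. rewrite C_bn by lia. reflexivity. Qed.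

Lemma above_eq d k w : (1 <= d)%nat -> (k <= d - 1)%nat -> length w = d ->
  n_above d k w = sum_range (dtau d k) d (fun l => C d l).
Proof.
  intros H1 H2 Hw. destruct (dtau_facts d k H1 H2) as (Q1 & Q2 & Q3 & Q4).
  unfold n_above. rewrite count_lsum.
  rewrite (lsum_ext_in _ _ (fun v => if Rlt_dec (INR k) (ip v w) then 1 else 0))
    by (intros; destruct Rlt_dec; reflexivity).
  pose proof (count_F d w (fun t => if Rlt_dec (INR k) t then 1 else 0) Hw) as E.
  cbv beta in E. rewrite E.
  replace (S d) with (dtau d k + (S d - dtau d k))%nat at 1 by lia.
  rewrite seq_app, lsum_app. simpl (0 + dtau d k)%nat.
  rewrite (lsum_ext_in (seq 0 (dtau d k)) _ (fun _ => 0)).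
  2:{ intros l Hl. apply in_seq in Hl. destruct Rlt_dec as [r|r]; [|ring].
      apply ind_iff in r. exfalso. apply (Q3 l); lia. }
  rewrite lsum_zero, Rplus_0_l.
  rewrite (lsum_ext_in _ _ (fun l => INR (bn d l))).
  2:{ intros l Hl. apply in_seq in Hl. destruct Rlt_dec as [r|r]; [ring|].
      exfalso. apply r. apply ind_iff. apply Q4; lia. }
  rewrite bn_C_seq by lia. reflexivity.
Qed.

Lemma below_eq d k w : (1 <= d)%nat -> (k <= d - 1)%nat -> length w = d ->
  n_below d k w = sum_range 0 (dtau d k - 1) (fun l => C d l).
Proof.
  intros H1 H2 Hw. destruct (dtau_facts d k H1 H2) as (Q1 & Q2 & Q3 & Q4).
  unfold n_below. rewrite count_lsum.
  rewrite (lsum_ext_in _ _ (fun v => if Rlt_dec (INR k) (ip v w) then 0 else 1))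
    by (intros; destruct Rlt_dec; reflexivity).
  pose proof (count_F d w (fun t => if Rlt_dec (INR k) t then 0 else 1) Hw) as E.
  cbv beta in E. rewrite E.
  replace (S d) with (dtau d k + (S d - dtau d k))%nat at 1 by lia.
  rewrite seq_app, lsum_app. simpl (0 + dtau d k)%nat.
  rewrite (lsum_ext_in (seq (dtau d k) _) _ (fun _ => 0)).
  2:{ intros l Hl. apply in_seq in Hl. destruct Rlt_dec as [r|r]; [ring|].
      exfalso. apply r. apply ind_iff. apply Q4; lia. }
  rewrite lsum_zero, Rplus_0_r.
  rewrite (lsum_ext_in _ _ (fun l => INR (bn d l))).
  2:{ intros l Hl. apply in_seq in Hl. destruct Rlt_dec as [r|r]; [|ring].
      apply ind_iff in r. exfalso. apply (Q3 l); lia. }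
  rewrite bn_C_seq by lia. unfold sum_range.
  replace (S (dtau d k - 1) - 0)%nat with (dtau d k) by lia. reflexivity.
Qed.

Lemma above_le_below d k w : length w = d -> n_above d k w <= n_below d k w.
Proof.
  intros Hw. unfold n_above, n_below. rewrite !count_lsum.
  rewrite (lsum_ext_in _ _ (fun v => if Rlt_dec (INR k) (ip v w) then 1 else 0))
    by (intros; destruct Rlt_dec; reflexivity).
  rewrite (lsum_ext_in _ (fun v => if (if Rlt_dec (INR k) (ip v w) then false else true) then 1 else 0)
     (fun v => if Rlt_dec (INR k) (ip v w) then 0 else 1))
    by (intros; destruct Rlt_dec; reflexivity).
  pose proof (count_F d w (fun t => if Rlt_dec (INR k) t then 1 else 0) Hw) as E.
  assert (Hw' : length (map negb w) = d) by (rewrite length_map; auto).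
  pose proof (count_F d (map negb w) (fun t => if Rlt_dec (INR k) t then 1 else 0) Hw') as E'.
  cbv beta in E, E'. rewrite E, <- E'.
  apply lsum_le_in. intros v _. rewrite ip_neg.
  pose proof (pos_INR k).
  destruct (Rlt_dec (INR k) (- ip v w)); destruct (Rlt_dec (INR k) (ip v w)); lra.
Qed.

Lemma sum_range_C_nonneg d a b l : (b <= d)%nat -> In l (seq a (S b - a)) -> 0 <= C d l.
Proof. intros H Hl. apply in_seq in Hl. rewrite C_bn by lia. apply pos_INR. Qed.

Lemma prob_Uhat_cons x u b w :
  prob_Uhat (x :: u) (b :: w) = (if b then (1 + x) / 2 else (1 - x) / 2) * prob_Uhat u w.
Proof. reflexivity. Qed.

Lemma prob_Uhat_nonneg : forall u w, Forall (fun x => -1 <= x <= 1) u -> 0 <= prob_Uhat u w.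
Proof. induction u; intros w H.
  - unfold prob_Uhat; simpl. lra.
  - destruct w as [|b w]. { unfold prob_Uhat; simpl. lra. }
    inversion H; subst. rewrite prob_Uhat_cons. apply Rmult_le_pos; [destruct b; lra|auto]. Qed.

Lemma prob_Uhat_sum : forall d u, length u = d -> lsum (signvecs d) (prob_Uhat u) = 1.
Proof. induction d; intros u Hu.
  - destruct u; [|discriminate]. unfold lsum, prob_Uhat; simpl. ring.
  - destruct u as [|x u]; [discriminate|]. simpl in Hu; injection Hu as Hu.
    simpl signvecs. rewrite lsum_app, !lsum_map.
    rewrite (lsum_ext_in _ (fun w => prob_Uhat (x :: u) (true :: w)) (fun w => (1 + x) / 2 * prob_Uhat u w))
      by reflexivity.
    rewrite (lsum_ext_in _ (fun w => prob_Uhat (x :: u) (false :: w)) (fun w => (1 - x) / 2 * prob_Uhat u w))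
      by reflexivity.
    rewrite !lsum_scal, IHd by auto. field. Qed.

Lemma exp_le x y : x <= y -> exp x <= exp y.
Proof. intros [H|H]; [left; apply exp_increasing; auto | subst; lra]. Qed.

Lemma key_ineq (A B t e1 : R) : 0 < A -> A <= B -> 1 <= t -> 1 <= e1 -> B <= e1 * A ->
  let a := t / (1 + t) / A in let c := (1 - t / (1 + t)) / B in
  a <= e1 * t * c /\ c <= e1 * t * a /\ a <= e1 * t * a /\ c <= e1 * t * c.
Proof.
  intros HA HAB Ht He HB a c.
  assert (HB0 : 0 < B) by lra.
  assert (Ea : a = t / ((1 + t) * A)) by (unfold a; field; lra).
  assert (Ec : c = 1 / ((1 + t) * B)) by (unfold c; field; lra).
  assert (Pa : 0 < a) by (rewrite Ea; apply Rdiv_lt_0_compat; nra).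
  assert (Pc : 0 < c) by (rewrite Ec; apply Rdiv_lt_0_compat; nra).
  set (K := (1 + t) * A * B).
  assert (PK : 0 < K) by (unfold K; apply Rmult_lt_0_compat; nra).
  assert (Ka : a * K = t * B) by (rewrite Ea; unfold K; field; lra).
  assert (Kc : c * K = A) by (rewrite Ec; unfold K; field; lra).
  assert (E1t : 1 <= e1 * t) by nra.
  repeat split; try nra.
  all: apply (Rmult_le_reg_r K); auto; rewrite ?Rmult_assoc, ?Ka, ?Kc; try nra.
assert (1 <= e1 * (t * t)) by nra. assert (B <= e1 * (t * t) * B) by nra. nra.
Qed.

Theorem theorem4p5 (d kappa : nat) (eps0 eps : R) :
  (1 <= d)%nat -> (kappa <= d - 1)%nat -> 0 <= eps0 -> 0 <= eps ->
  ln (sum_range 0 (dtau d kappa - 1) (fun l => C d l))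
    - ln (sum_range (dtau d kappa) d (fun l => C d l)) <= eps ->
  privunit_LDP d kappa (exp eps0 / (1 + exp eps0)) (eps + eps0).
Proof.
  intros Hd Hk He0 He Hln u u' Sset [Hu Fu] [Hu' Fu'].
  destruct (dtau_facts d kappa Hd Hk) as (Q1 & Q2 & _ & _).
  set (A := sum_range (dtau d kappa) d (fun l => C d l)) in *.
  set (B := sum_range 0 (dtau d kappa - 1) (fun l => C d l)) in *.
  assert (HA : 1 <= A).
  { unfold A, sum_range. change (fold_right Rplus 0 (map (fun l => C d l) (seq (dtau d kappa) (S d - dtau d kappa))))
      with (lsum (seq (dtau d kappa) (S d - dtau d kappa)) (fun l => C d l)).
    rewrite <- (C_nn d). apply (lsum_ge_term _ (fun l => C d l) d).
    - intros l Hl. apply (sum_range_C_nonneg d (dtau d kappa) d l); auto.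
    - apply in_seq. lia. }
  assert (HB : 1 <= B).
  { unfold B, sum_range. change (fold_right Rplus 0 (map (fun l => C d l) (seq 0 (S (dtau d kappa - 1) - 0))))
      with (lsum (seq 0 (S (dtau d kappa - 1) - 0)) (fun l => C d l)).
    rewrite <- (C_n0 d). apply (lsum_ge_term _ (fun l => C d l) 0%nat).
    - intros l Hl. apply (sum_range_C_nonneg d 0 (dtau d kappa - 1) l); auto. lia.
    - apply in_seq. lia. }
  assert (HAB : A <= B).
  { assert (Hr : length (repeat true d) = d) by apply repeat_length.
    assert (E1 : n_above d kappa (repeat true d) = A) by (apply above_eq; auto).
    assert (E2 : n_below d kappa (repeat true d) = B) by (apply below_eq; auto).
    rewrite <- E1, <- E2.
    apply above_le_below; auto. }
  assert (HBA : B <= exp eps * A).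
  { rewrite <- (exp_ln B) by lra. rewrite <- (exp_ln A) by lra.
    rewrite <- exp_plus. apply exp_le. lra. }
  set (t := exp eps0). set (e1 := exp eps).
  assert (Ht : 1 <= t) by (unfold t; rewrite <- exp_0; apply exp_le; auto).
  assert (He1 : 1 <= e1) by (unfold e1; rewrite <- exp_0; apply exp_le; auto).
  rewrite exp_plus. fold t e1.
  destruct (key_ineq A B t e1 ltac:(lra) HAB Ht He1 HBA) as (K1 & K2 & K3 & K4).
  set (a := t / (1 + t) / A) in *. set (c := (1 - t / (1 + t)) / B) in *.
  assert (Hq : forall w v, In w (signvecs d) ->
     Rmin a c <= prob_V_given d kappa (t / (1 + t)) w v <= Rmax a c).
  { intros w v Hw. apply signvecs_len in Hw. unfold prob_V_given.
    assert (E1 : n_above d kappa w = A) by (apply above_eq; auto).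
    assert (E2 : n_below d kappa w = B) by (apply below_eq; auto).
    rewrite E1, E2. fold a c.
    destruct Rlt_dec; split; auto using Rmin_l, Rmin_r, Rmax_l, Rmax_r. }
  assert (Hhl : Rmax a c <= e1 * t * Rmin a c).
  { unfold Rmax, Rmin. destruct (Rle_dec a c); auto. }
  assert (Hup : forall v, prob_V d kappa (t / (1 + t)) u v <= Rmax a c).
  { intros v. unfold prob_V.
    apply Rle_trans with (lsum (signvecs d) (fun w => Rmax a c * prob_Uhat u w)).
    - apply lsum_le_in. intros w Hw. rewrite Rmult_comm.
      apply Rmult_le_compat_r; [apply prob_Uhat_nonneg; auto | apply (Hq w v Hw)].
    - rewrite lsum_scal, prob_Uhat_sum by auto. lra. }
  assert (Hlo : forall v, Rmin a c <= prob_V d kappa (t / (1 + t)) u' v).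
  { intros v. unfold prob_V.
    apply Rle_trans with (lsum (signvecs d) (fun w => Rmin a c * prob_Uhat u' w)).
    - rewrite lsum_scal, prob_Uhat_sum by auto. lra.
    - apply lsum_le_in. intros w Hw. rewrite (Rmult_comm (Rmin a c)).
      apply Rmult_le_compat_l; [apply prob_Uhat_nonneg; auto | apply (Hq w v Hw)]. }
  unfold prob_out. rewrite <- lsum_scal. apply lsum_le_in. intros v _.
  assert (HI : 0 <= indic Sset (outZ d kappa (t / (1 + t)) v)) by (unfold indic; destruct excluded_middle_informative; lra).
  pose proof (Hup v). pose proof (Hlo v).
  assert (Hpv : prob_V d kappa (t / (1 + t)) u v <= e1 * t * prob_V d kappa (t / (1 + t)) u' v).
  { apply Rle_trans with (Rmax a c); auto. apply Rle_trans with (e1 * t * Rmin a c); auto.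
    apply Rmult_le_compat_l; auto. nra. }
  replace (e1 * t * (indic Sset (outZ d kappa (t / (1 + t)) v) * prob_V d kappa (t / (1 + t)) u' v))
    with (indic Sset (outZ d kappa (t / (1 + t)) v) * (e1 * t * prob_V d kappa (t / (1 + t)) u' v)) by ring.
  apply Rmult_le_compat_l; auto.
Qed.
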